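(* Let $L=\mathbb Z^2$ with $B(x,y)=x\begin{pmatrix}2&1\\1&8\end{pmatrix}y^T$ (the lattice of the form $x^2+xy+4y^2$), $Q(x)=\frac12B(x,x)$, and for $\alpha,\beta\in\mathbb Q^2$ put $\theta_{\alpha,\beta}(\tau,z)=\sum_{v\in\mathbb Z^2}e(B(\beta,v))\,e(\tau Q(\alpha+v)+B(\alpha+v,z))$ on $\mathbb H\times\mathbb C^2$. Then the nine functions $\theta_{\alpha,\beta}^3$ with $\alpha\in\{(0,0),(\frac13,\frac13),(\frac23,\frac23)\}$ and $\beta\in\{(0,0),(\frac13,0),(\frac23,0)\}$ are $\mathbb C$-linearly independent.
   Context: $e(x)=\exp(2\pi ix)$, $\mathbb H$ the upper half plane; $B$ is extended bilinearly to $\mathbb C^2$. *)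

(* Defs.v *)
From Stdlib Require Import Reals ZArith.
From Coquelicot Require Import Coquelicot.
Open Scope R_scope.

(* e(w) = exp(2 pi i w) for complex w *)
Definition ee (w : C) : C :=
  (exp (- (2 * PI * Im w)) * cos (2 * PI * Re w),
   exp (- (2 * PI * Im w)) * sin (2 * PI * Re w)).

Definition vec := (C * C)%type.

(* B(x,y) = x [[2,1],[1,8]] y^T, extended bilinearly to C^2 *)
Definition Bf (x y : vec) : C :=
  (RtoC 2 * fst x * fst y + fst x * snd y + snd x * fst y
   + RtoC 8 * snd x * snd y)%C.

Definition Qf (x : vec) : C := (Bf x x / RtoC 2)%C.

Definition vadd (x y : vec) : vec := (fst x + fst y, snd x + snd y)%C.

Definition rvec (a b : R) : vec := (RtoC a, RtoC b).

Definition theta_term (alpha beta : vec) (tau : C) (z : vec) (m n : Z) : C :=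
  let v := rvec (IZR m) (IZR n) in
  (ee (Bf beta v) * ee (tau * Qf (vadd alpha v) + Bf (vadd alpha v) z))%C.

Definition theta_partial (alpha beta : vec) (tau : C) (z : vec) (N : nat) : C :=
  sum_n (fun i : nat =>
    sum_n (fun j : nat =>
      theta_term alpha beta tau z (Z.of_nat i - Z.of_nat N)%Z
                                  (Z.of_nat j - Z.of_nat N)%Z) (2 * N)) (2 * N).

(* theta_{alpha,beta}(tau,z): the (absolutely convergent) sum over Z^2,
   taken as the limit of the square partial sums, real and imaginary parts. *)
Definition theta (alpha beta : vec) (tau : C) (z : vec) : C :=
  (real (Lim_seq (fun N => Re (theta_partial alpha beta tau z N))),
   real (Lim_seq (fun N => Im (theta_partial alpha beta tau z N)))).

Definition alpha_ (i : nat) : vec := rvec (INR i / 3) (INR i / 3).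
Definition beta_ (j : nat) : vec := rvec (INR j / 3) 0.

Definition cube (w : C) : C := (w * w * w)%C.

(* Main.v *)
Require Import Defs.
From Stdlib Require Import Reals ZArith Lra Lia Psatz.
From Coquelicot Require Import Coquelicot.
Open Scope R_scope.

Lemma c_proj_eq (x y : C) : fst x = fst y -> snd x = snd y -> x = y.
Proof. destruct x, y; simpl; intros -> ->; reflexivity. Qed.

Definition BR (x1 x2 y1 y2 : R) := 2*x1*y1 + x1*y2 + x2*y1 + 8*x2*y2.
Definition QR (x1 x2 : R) := BR x1 x2 x1 x2 / 2.
Definition eR (r : R) : C := (cos (2*PI*r), sin (2*PI*r)).

Lemma Bf_rvec a b c d : Bf (rvec a b) (rvec c d) = RtoC (BR a b c d).
Proof. unfold Bf, rvec, BR, RtoC. apply c_proj_eq; simpl; ring. Qed.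

Lemma ee_RtoC r : ee (RtoC r) = eR r.
Proof. unfold ee, eR, RtoC; simpl. rewrite Rmult_0_r, Ropp_0, exp_0. f_equal; ring. Qed.

Lemma ee_pair a b : ee (a, b) = (eR a * RtoC (exp (-(2*PI*b))))%C.
Proof. unfold ee, eR, RtoC. apply c_proj_eq; simpl; ring. Qed.

Lemma term_eq a1 a2 b1 b2 x1 x2 u1 u2 t m n :
  theta_term (rvec a1 a2) (rvec b1 b2) (0,t) ((x1,t*u1),(x2,t*u2))%R m n =
  (eR (BR b1 b2 (IZR m) (IZR n)) * eR (BR (a1 + IZR m) (a2 + IZR n) x1 x2)
   * RtoC (exp (-(2*PI*(t*(QR (a1+IZR m+u1) (a2+IZR n+u2) - QR u1 u2))))))%C.
Proof.
  unfold theta_term. rewrite Bf_rvec, ee_RtoC.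
  match goal with |- (_ * ee ?w = _)%C => 
    replace w with (BR (a1 + IZR m) (a2 + IZR n) x1 x2, t*(QR (a1+IZR m+u1) (a2+IZR n+u2) - QR u1 u2)) end.
  - rewrite ee_pair. ring.
  - unfold Qf, Bf, vadd, rvec, BR, QR, RtoC. apply c_proj_eq; simpl.
    + unfold BR. field.
    + unfold BR. field.
Qed.

Lemma Rabs_le_inv x e : Rabs x <= e -> -e <= x <= e.
Proof. unfold Rabs; destruct Rcase_abs; lra. Qed.

Lemma lim_bound (u : nat -> R) L e N0 :
  (forall N, (N0 <= N)%nat -> Rabs (u N - L) <= e) -> Rabs (real (Lim_seq u) - L) <= e.
Proof.
  intros H.
  assert (H1 : Rbar_le (Lim_seq u) (Lim_seq (fun _ => L + e))).
  { apply Lim_seq_le_loc. exists N0. intros n Hn. specialize (H n Hn).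
    apply Rabs_le_inv in H. lra. }
  assert (H2 : Rbar_le (Lim_seq (fun _ => L - e)) (Lim_seq u)).
  { apply Lim_seq_le_loc. exists N0. intros n Hn. specialize (H n Hn).
    apply Rabs_le_inv in H. lra. }
  rewrite Lim_seq_const in H1, H2.
  destruct (Lim_seq u) as [r| |]; simpl in *; try contradiction.
  apply Rabs_le; lra.
Qed.

Definition boxsum {G : AbelianMonoid} (f : Z -> Z -> G) (N : nat) : G :=
  sum_n (fun i => sum_n (fun j =>
     f (Z.of_nat i - Z.of_nat N)%Z (Z.of_nat j - Z.of_nat N)%Z) (2 * N)) (2 * N).

Lemma theta_partial_box a b t z N :
  theta_partial a b t z N = boxsum (theta_term a b t z) N.
Proof. reflexivity. Qed.

Lemma boxsum_mult_r (f : Z -> Z -> C) (c : C) N :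
  boxsum (fun m n => (f m n * c)%C) N = (boxsum f N * c)%C.
Proof.
  unfold boxsum.
  rewrite <- (sum_n_mult_r (K := C_Ring)). apply sum_n_ext. intro i.
  rewrite <- (sum_n_mult_r (K := C_Ring)). reflexivity.
Qed.

Lemma boxsum_plus (f g : Z -> Z -> C) N :
  boxsum (fun m n => (f m n + g m n)%C) N = (boxsum f N + boxsum g N)%C.
Proof.
  unfold boxsum.
  rewrite <- (sum_n_plus (G := C_AbelianMonoid)). apply sum_n_ext. intro i.
  rewrite <- (sum_n_plus (G := C_AbelianMonoid)). reflexivity.
Qed.

Lemma sum_n_norm_C (f : nat -> C) M : Cmod (sum_n f M) <= sum_n (fun i => Cmod (f i)) M.
Proof. apply (norm_sum_n_m (K := C_AbsRing) (V := C_NormedModule)). Qed.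

Lemma sum_n_le_R (f g : nat -> R) M : (forall i, f i <= g i) -> sum_n f M <= sum_n g M.
Proof. intros H. apply sum_n_m_le. exact H. Qed.

Lemma boxsum_norm (f : Z -> Z -> C) N :
  Cmod (boxsum f N) <= boxsum (G := R_AbelianMonoid) (fun m n => Cmod (f m n)) N.
Proof.
  unfold boxsum. eapply Rle_trans. apply sum_n_norm_C.
  apply sum_n_le_R. intro i. apply sum_n_norm_C.
Qed.

Lemma boxsum_le (f g : Z -> Z -> R) N : (forall m n, f m n <= g m n) ->
  boxsum (G := R_AbelianMonoid) f N <= boxsum (G := R_AbelianMonoid) g N.
Proof.
  intros H. unfold boxsum. apply sum_n_le_R. intro i. apply sum_n_le_R. intro j. apply H.
Qed.

Lemma pow_le1' x n : 0 <= x <= 1 -> x ^ n <= 1.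
Proof. intros H. induction n; simpl. lra. assert (0 <= x^n) by (apply pow_le; lra). nra. Qed.

Lemma geo_bound N M :
  sum_n (fun i => (1/2) ^ ((N - i) + (i - N))) M <=
  if (M <? N)%nat then 2 * (1/2) ^ (N - M) else 4 - 2 * (1/2) ^ (M - N).
Proof.
  induction M as [|M IH].
  - rewrite sum_O. destruct N as [|N]; simpl.
    + lra.
    + rewrite Nat.add_0_r. assert (0 < (1/2)^N) by (apply pow_lt; lra). lra.
  - rewrite sum_Sn. change (plus ?a ?b) with (a + b).
    destruct (Nat.ltb_spec M N) as [h|h]; destruct (Nat.ltb_spec (S M) N) as [h'|h'].
    + replace (N - M)%nat with (S (N - S M)) in IH by lia.
      replace ((N - S M) + (S M - N))%nat with (N - S M)%nat by lia.
      simpl in IH. lra.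
    + assert (N = S M) by lia. subst N.
      replace (S M - M)%nat with 1%nat in IH by lia.
      replace ((S M - S M) + (S M - S M))%nat with 0%nat by lia.
      rewrite Nat.sub_diag. simpl in *. lra.
    + lia.
    + replace ((N - S M) + (S M - N))%nat with (S (M - N)) by lia.
      replace (S M - N)%nat with (S (M - N)) by lia.
      simpl. assert (0 < (1/2)^(M-N)) by (apply pow_lt; lra). lra.
Qed.

Lemma geo_bound4 N M : sum_n (fun i => (1/2) ^ ((N - i) + (i - N))) M <= 4.
Proof.
  eapply Rle_trans. apply geo_bound.
  destruct (M <? N)%nat.
  - assert (0 < (1/2)^(N-M) <= 1) by (split; [apply pow_lt; lra | apply pow_le1'; lra]). lra.
  - assert (0 < (1/2)^(M-N)) by (apply pow_lt; lra). lra.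
Qed.

Lemma boxsumR_mult_l (f : Z -> Z -> R) (c : R) N :
  boxsum (G := R_AbelianMonoid) (fun m n => c * f m n) N = c * boxsum (G := R_AbelianMonoid) f N.
Proof.
  unfold boxsum.
  rewrite <- (sum_n_mult_l (K := R_Ring)). apply sum_n_ext. intro i.
  rewrite <- (sum_n_mult_l (K := R_Ring)). reflexivity.
Qed.

Lemma absnat_diff i N : Z.abs_nat (Z.of_nat i - Z.of_nat N) = ((N - i) + (i - N))%nat.
Proof. apply Nat2Z.inj. rewrite Zabs2Nat.id_abs. lia. Qed.

Lemma box_geo N :
  boxsum (G := R_AbelianMonoid) (fun m n => (1/2)^(Z.abs_nat m) * (1/2)^(Z.abs_nat n)) N <= 16.
Proof.
  unfold boxsum.
  apply Rle_trans with (sum_n (fun i => 4 * (1/2) ^ ((N - i) + (i - N))) (2 * N)).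
  - apply sum_n_le_R. intro i.
    replace (Z.abs_nat (Z.of_nat i - Z.of_nat N)) with ((N - i) + (i - N))%nat by (symmetry; apply absnat_diff).
    rewrite (sum_n_mult_l (K := R_Ring)). change (mult ?a ?b) with (a * b).
    rewrite Rmult_comm. apply Rmult_le_compat_r. apply pow_le; lra.
    eapply Rle_trans; [|apply (geo_bound4 N (2*N))]. apply Req_le. apply sum_n_ext.
    intro j. f_equal. apply absnat_diff.
  - rewrite (sum_n_mult_l (K := R_Ring)). change (mult ?a ?b) with (a * b).
    apply Rle_trans with (4*4); [apply Rmult_le_compat_l; [lra| exact (geo_bound4 N (2*N))] | lra].
Qed.

Lemma half_pow_anti a b : (a <= b)%nat -> (1/2)^b <= (1/2)^a.
Proof.
  intros H. replace b with (a + (b - a))%nat by lia. rewrite pow_add.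
  assert (0 <= (1/2)^a) by (apply pow_le; lra).
  assert ((1/2)^(b-a) <= 1) by (apply pow_le1'; lra). nra.
Qed.

Lemma Cmod_RtoC_pos r : 0 <= r -> Cmod (RtoC r) = r.
Proof. intros H. rewrite Cmod_R. apply Rabs_pos_eq, H. Qed.

Lemma box_approx (ph h : Z -> Z -> C) (K : Z -> Z -> nat) (s : R) (C0 : nat) N :
  0 <= s <= 1/2 -> (forall m n, Cmod (ph m n) <= 1) ->
  (forall m n, h m n = if (K m n =? 0)%nat then ph m n else RtoC 0) ->
  (forall m n, (Z.abs_nat m + Z.abs_nat n <= K m n + C0)%nat) ->
  Cmod (boxsum (fun m n => (ph m n * RtoC (s ^ (K m n)))%C) N - boxsum h N) <= 32 * s * 2 ^ C0.
Proof.
  intros Hs Hph Hh HK.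
  replace (boxsum (fun m n => (ph m n * RtoC (s ^ (K m n)))%C) N - boxsum h N)%C
    with (boxsum (fun m n => (ph m n * RtoC (s ^ (K m n)) + h m n * RtoC (-1))%C) N).
  2:{ rewrite boxsum_plus, boxsum_mult_r. unfold RtoC. apply c_proj_eq; simpl; ring. }
  eapply Rle_trans. apply boxsum_norm.
  eapply Rle_trans. apply boxsum_le with
    (g := fun m n => (2 * s * 2 ^ C0) * ((1/2)^(Z.abs_nat m) * (1/2)^(Z.abs_nat n))).
  - intros m n. rewrite Hh. specialize (HK m n).
    assert (P2 : 0 < 2 ^ C0) by (apply pow_lt; lra).
    assert (Pm : 0 < (1/2)^(Z.abs_nat m)) by (apply pow_lt; lra).
    assert (Pn : 0 < (1/2)^(Z.abs_nat n)) by (apply pow_lt; lra).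
    destruct (K m n) as [|k] eqn:EK; simpl Nat.eqb; cbv iota.
    + replace (ph m n * RtoC (s ^ 0) + ph m n * RtoC (-1))%C with (RtoC 0).
      2:{ unfold RtoC. apply c_proj_eq; simpl; ring. }
      replace (Cmod (RtoC 0)) with 0 by (rewrite Cmod_R, Rabs_R0; reflexivity). assert (0 <= s) by lra.
      apply Rmult_le_pos; [apply Rmult_le_pos; lra | apply Rmult_le_pos; lra].
    + replace (ph m n * RtoC (s ^ S k) + RtoC 0 * RtoC (-1))%C with (ph m n * RtoC (s ^ S k))%C.
      2:{ unfold RtoC. apply c_proj_eq; simpl; ring. }
      rewrite Cmod_mult, Cmod_RtoC_pos by (apply pow_le; lra).
      assert (H1 : s ^ k <= (1/2)^k) by (apply pow_incr; lra).
      assert (H2 : (1/2)^(S k + C0) <= (1/2)^(Z.abs_nat m + Z.abs_nat n)) by (apply half_pow_anti; lia).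
      rewrite pow_add, pow_add in H2.
      assert (H3 : 2 ^ C0 * (1/2)^C0 = 1).
      { rewrite <- Rpow_mult_distr. replace (2 * (1/2)) with 1 by field. apply pow1. }
      assert (0 <= (1/2)^k) by (apply pow_le; lra).
      assert (0 <= s^k) by (apply pow_le; lra).
      assert (0 <= Cmod (ph m n)) by apply Cmod_ge_0.
      specialize (Hph m n). simpl.
      assert (Q4 : (1/2)^k <= 2 * 2^C0 * ((1/2)^(Z.abs_nat m) * (1/2)^(Z.abs_nat n))).
      { assert (0 < (1/2)^C0) by (apply pow_lt; lra).
        assert (E : (1/2)^k = 2 * 2^C0 * ((1/2)^(S k) * (1/2)^C0)).
        { simpl. replace (2 * 2 ^ C0 * (1 / 2 * (1 / 2) ^ k * (1 / 2) ^ C0)) with ((2 ^ C0 * (1/2)^C0) * (1/2)^k) by field. rewrite H3. ring. }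
        rewrite E. nra. }
      assert (Q5 : Cmod (ph m n) * (s * s ^ k) <= s * (1/2)^k).
      { assert (0 <= s * s^k) by nra. nra. }
      nra.
  - rewrite boxsumR_mult_l. pose proof (box_geo N).
    assert (0 <= 2 * s * 2 ^ C0). { assert (0 < 2^C0) by (apply pow_lt; lra). nra. }
    nra.
Qed.

Definition Kz (d m n : Z) : Z :=
  let X := (2*d + 6*m + 3)%Z in let Y := (2*d+6*n)%Z in (X*X + X*Y + 4*Y*Y - 9)%Z.
Lemma Kz_eq d m n : Kz d m n = (9*(d+2*m+n+1)*(d+2*m+n+1) + 15*(d+3*n)*(d+3*n) - 9)%Z.
Proof. unfold Kz. ring. Qed.
Lemma sq_abs a : (Z.abs a <= a * a)%Z.
Proof. destruct (Z.abs_spec a) as [[h e]|[h e]]; rewrite e; nia. Qed.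
Lemma Kz_nonneg d m n : (-2 <= d <= 2)%Z -> (0 <= Kz d m n)%Z.
Proof. intros. rewrite Kz_eq. set (A := (d+2*m+n+1)%Z). set (B := (d+3*n)%Z).
  destruct (Z.eq_dec B 0) as [e|e].
  - assert (d = 0 /\ n = 0)%Z as [-> ->] by lia. subst A. rewrite e. nia.
  - assert (1 <= B*B)%Z by nia. nia. Qed.
Lemma Kz_bound d m n : (-2 <= d <= 2)%Z -> (Z.abs m + Z.abs n <= Kz d m n + 15)%Z.
Proof. intros. pose proof (Kz_nonneg d m n H). rewrite Kz_eq in *.
  pose proof (sq_abs (d+2*m+n+1)). pose proof (sq_abs (d+3*n)). lia. Qed.
Lemma Kz_zero d m n : (-2 <= d <= 2)%Z -> Kz d m n = 0%Z -> d = 0%Z /\ n = 0%Z /\ (m = 0 \/ m = -1)%Z.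
Proof. intros H E. rewrite Kz_eq in E. set (A := (d+2*m+n+1)%Z) in *. set (B := (d+3*n)%Z) in *.
  destruct (Z.eq_dec B 0) as [e|e].
  - assert (d = 0 /\ n = 0)%Z as [-> ->] by lia. subst A. rewrite e in E. split; [lia|split;[lia|nia]].
  - assert (1 <= B*B)%Z by nia. assert (0 <= A*A)%Z by nia. lia. Qed.

Definition u1 (i0 : nat) := 1/2 - INR i0 / 3.
Definition u2 (i0 : nat) := - (INR i0 / 3).
Definition zt (i0 k : nat) (t : R) : vec := ((INR k / 6, t * u1 i0), (0, t * u2 i0)).
Definition Ft (i0 : nat) (t : R) := exp (2*PI*(t*(1/4 - QR (u1 i0) (u2 i0)))).
Definition st (t : R) := exp (-(2*PI*t/36)).
Definition ph (i j k : nat) (m n : Z) : C :=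
  (eR (BR (INR j / 3) 0 (IZR m) (IZR n)) * eR (BR (INR i / 3 + IZR m) (INR i / 3 + IZR n) (INR k / 6) 0))%C.
Definition dd (i0 i : nat) : Z := (Z.of_nat i - Z.of_nat i0)%Z.
Definition Kn (i0 i : nat) (m n : Z) : nat := Z.to_nat (Kz (dd i0 i) m n).

Lemma exp_mult_INR a n : exp (a * INR n) = exp a ^ n.
Proof. induction n. simpl. rewrite Rmult_0_r. apply exp_0.
  rewrite S_INR, Rmult_plus_distr_l, exp_plus, IHn, Rmult_1_r. simpl. ring. Qed.

Lemma RtoC_mult a b : (RtoC a * RtoC b)%C = RtoC (a * b).
Proof. unfold RtoC. apply c_proj_eq; simpl; ring. Qed.

Lemma dd_range i0 i : (i0 < 3)%nat -> (i < 3)%nat -> (-2 <= dd i0 i <= 2)%Z.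
Proof. unfold dd. lia. Qed.

Lemma term_scaled i0 k i j t m n : (i0 < 3)%nat -> (i < 3)%nat ->
  (theta_term (alpha_ i) (beta_ j) (0,t) (zt i0 k t) m n * RtoC (Ft i0 t))%C =
  (ph i j k m n * RtoC (st t ^ Kn i0 i m n))%C.
Proof.
  intros Hi0 Hi. unfold alpha_, beta_, zt. rewrite term_eq. unfold ph.
  rewrite <- Cmult_assoc, RtoC_mult. f_equal. f_equal.
  unfold Ft, st, Kn. rewrite <- exp_plus, <- exp_mult_INR. f_equal.
  rewrite (INR_IZR_INZ (Z.to_nat (Kz _ _ _))), Z2Nat.id by (apply Kz_nonneg, dd_range; auto).
  unfold Kz, dd. rewrite !minus_IZR, !plus_IZR, !mult_IZR, !plus_IZR, !mult_IZR, minus_IZR.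
  rewrite <- !INR_IZR_INZ. unfold QR, BR, u1, u2. field.
Qed.

Lemma boxsum_ext (f g : Z -> Z -> C) N : (forall m n, f m n = g m n) -> boxsum f N = boxsum g N.
Proof. intros H. unfold boxsum. apply sum_n_ext. intro i. apply sum_n_ext. intro j. apply H. Qed.

Lemma sum_n_point (f : nat -> C) p : (forall q, q <> p -> f q = RtoC 0) ->
  forall M, sum_n f M = if (p <=? M)%nat then f p else RtoC 0.
Proof.
  intros Hf M. induction M as [|M IH].
  - rewrite sum_O. destruct p; simpl. reflexivity. apply Hf. lia.
  - rewrite sum_Sn, IH. change (plus ?a ?b) with (Cplus a b).
    destruct (Nat.leb_spec p M); destruct (Nat.leb_spec p (S M)); try lia.
    + rewrite (Hf (S M)) by lia. unfold RtoC; apply c_proj_eq; simpl; ring.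
    + assert (p = S M) by lia. subst. unfold RtoC; apply c_proj_eq; simpl; ring.
    + rewrite (Hf (S M)) by lia. unfold RtoC; apply c_proj_eq; simpl; ring.
Qed.

Lemma boxsum_point (A : C) (m0 n0 : Z) N : (Z.abs m0 <= Z.of_nat N)%Z -> (Z.abs n0 <= Z.of_nat N)%Z ->
  boxsum (fun m n => if (Z.eqb m m0 && Z.eqb n n0)%bool then A else RtoC 0) N = A.
Proof.
  intros H1 H2. unfold boxsum.
  rewrite sum_n_ext with (b := fun i => if Z.eqb (Z.of_nat i - Z.of_nat N) m0 then A else RtoC 0).
  - rewrite (sum_n_point _ (Z.to_nat (m0 + Z.of_nat N))).
    + replace (Z.to_nat (m0 + Z.of_nat N) <=? 2 * N)%nat with true by (symmetry; apply Nat.leb_le; lia).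
      replace (Z.of_nat (Z.to_nat (m0 + Z.of_nat N)) - Z.of_nat N =? m0)%Z with true by (symmetry; apply Z.eqb_eq; lia).
      reflexivity.
    + intros q Hq. destruct (Z.eqb_spec (Z.of_nat q - Z.of_nat N) m0); [lia|reflexivity].
  - intro i. destruct (Z.eqb_spec (Z.of_nat i - Z.of_nat N) m0) as [e|e]; cbn [andb].
    + rewrite (sum_n_point _ (Z.to_nat (n0 + Z.of_nat N))).
      * replace (Z.to_nat (n0 + Z.of_nat N) <=? 2 * N)%nat with true by (symmetry; apply Nat.leb_le; lia).
        replace (Z.of_nat (Z.to_nat (n0 + Z.of_nat N)) - Z.of_nat N =? n0)%Z with true by (symmetry; apply Z.eqb_eq; lia).
        reflexivity.
      * intros q Hq. destruct (Z.eqb_spec (Z.of_nat q - Z.of_nat N) n0); [lia|reflexivity].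
    + rewrite (sum_n_point _ O).
      * destruct (0 <=? 2*N)%nat; reflexivity.
      * intros; reflexivity.
Qed.

Definition hh i0 i j k (m n : Z) : C := if (Kn i0 i m n =? 0)%nat then ph i j k m n else RtoC 0.
Definition target i0 i j k : C := if (i =? i0)%nat then (ph i j k 0 0 + ph i j k (-1) 0)%C else RtoC 0.

Lemma Kn_zero i0 i m n : (i0 < 3)%nat -> (i < 3)%nat ->
  (Kn i0 i m n = 0)%nat <-> (i = i0 /\ n = 0%Z /\ (m = 0 \/ m = -1)%Z).
Proof.
  intros H0 H. unfold Kn. pose proof (Kz_nonneg (dd i0 i) m n (dd_range _ _ H0 H)).
  split.
  - intros E. assert (Kz (dd i0 i) m n = 0%Z) by lia.
    destruct (Kz_zero _ _ _ (dd_range _ _ H0 H) H2) as [e1 [e2 e3]]. unfold dd in e1.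
    split; [lia|auto].
  - intros [-> [-> [-> | ->]]]; unfold dd, Kz; rewrite Z.sub_diag; reflexivity.
Qed.

Lemma box_h i0 i j k N : (i0 < 3)%nat -> (i < 3)%nat -> (1 <= N)%nat ->
  boxsum (hh i0 i j k) N = target i0 i j k.
Proof.
  intros H0 H HN. unfold target.
  destruct (Nat.eqb_spec i i0) as [e|e].
  - rewrite boxsum_ext with (g := fun m n =>
      ((if (Z.eqb m 0 && Z.eqb n 0)%bool then ph i j k 0 0 else RtoC 0) +
       (if (Z.eqb m (-1) && Z.eqb n 0)%bool then ph i j k (-1) 0 else RtoC 0))%C).
    + rewrite boxsum_plus, !boxsum_point; try reflexivity; simpl; lia.
    + intros m n. unfold hh.
      destruct (Nat.eqb_spec (Kn i0 i m n) 0) as [E|E].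
      * apply (Kn_zero _ _ _ _ H0 H) in E. destruct E as [_ [-> [-> | ->]]]; simpl;
        unfold RtoC; apply c_proj_eq; simpl; ring.
      * destruct (Z.eqb_spec m 0); destruct (Z.eqb_spec n 0); destruct (Z.eqb_spec m (-1)); simpl;
        try (exfalso; apply E; apply Kn_zero; auto; lia);
        unfold RtoC; apply c_proj_eq; simpl; ring.
  - rewrite boxsum_ext with (g := fun m n => (RtoC 0 * RtoC 0)%C).
    + rewrite boxsum_mult_r. unfold RtoC; apply c_proj_eq; simpl; ring.
    + intros m n. unfold hh. destruct (Nat.eqb_spec (Kn i0 i m n) 0) as [E|E].
      * apply (Kn_zero _ _ _ _ H0 H) in E. lia.
      * unfold RtoC; apply c_proj_eq; simpl; ring.
Qed.

Lemma Ft_pos i0 t : 0 < Ft i0 t.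
Proof. apply exp_pos. Qed.

Lemma re_im_bound (w : C) : Rabs (fst w) <= Cmod w /\ Rabs (snd w) <= Cmod w.
Proof. pose proof (Rmax_Cmod w). split; eapply Rle_trans; try exact H; [apply Rmax_l | apply Rmax_r]. Qed.

Lemma comp_bound (P : nat -> C) (T : C) (F e : R) N0 :
  0 < F -> (forall N, (N0 <= N)%nat -> Cmod (P N * RtoC F - T) <= e) ->
  Cmod ((real (Lim_seq (fun N => fst (P N))), real (Lim_seq (fun N => snd (P N)))) * RtoC F - T) <= 2 * e.
Proof.
  intros HF H.
  assert (A1 : Rabs (real (Lim_seq (fun N => fst (P N))) - fst T / F) <= e / F).
  { apply lim_bound with N0. intros N HN. destruct (re_im_bound (P N * RtoC F - T)) as [h _].
    specialize (H N HN). simpl in h.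
    replace (fst (P N) - fst T / F) with ((fst (P N) * F - 0 * 0 - fst T) / F) by (field; lra).
    rewrite Rabs_div by lra. rewrite (Rabs_pos_eq F) by lra.
    apply Rmult_le_compat_r. left; apply Rinv_0_lt_compat; lra. eapply Rle_trans; [|exact H]; eapply Rle_trans; [|exact h]; right; f_equal; ring. }
  assert (A2 : Rabs (real (Lim_seq (fun N => snd (P N))) - snd T / F) <= e / F).
  { apply lim_bound with N0. intros N HN. destruct (re_im_bound (P N * RtoC F - T)) as [_ h].
    specialize (H N HN). simpl in h.
    replace (snd (P N) - snd T / F) with ((fst (P N) * 0 + snd (P N) * F - snd T) / F) by (field; lra).
    rewrite Rabs_div by lra. rewrite (Rabs_pos_eq F) by lra.
    apply Rmult_le_compat_r. left; apply Rinv_0_lt_compat; lra. eapply Rle_trans; [|exact H]; eapply Rle_trans; [|exact h]; right; f_equal; ring. }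
  set (a := real (Lim_seq (fun N => fst (P N)))) in *.
  set (b := real (Lim_seq (fun N => snd (P N)))) in *.
  eapply Rle_trans. apply Cmod_2Rmax. simpl.
  assert (E1 : Rabs (a * F - b * 0 + - fst T) <= e).
  { replace (a * F - b * 0 + - fst T) with ((a - fst T / F) * F) by (field; lra).
    rewrite Rabs_mult, (Rabs_pos_eq F) by lra.
    apply Rmult_le_compat_r with (r := F) in A1; [|lra].
    replace (e / F * F) with e in A1 by (field; lra). exact A1. }
  assert (E2 : Rabs (a * 0 + b * F + - snd T) <= e).
  { replace (a * 0 + b * F + - snd T) with ((b - snd T / F) * F) by (field; lra).
    rewrite Rabs_mult, (Rabs_pos_eq F) by lra.
    apply Rmult_le_compat_r with (r := F) in A2; [|lra].
    replace (e / F * F) with e in A2 by (field; lra). exact A2. }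
  assert (S2 : sqrt 2 <= 2).
  { rewrite <- (sqrt_square 2) at 2 by lra. apply sqrt_le_1_alt. lra. }
  assert (0 <= e) by (eapply Rle_trans; [apply Rabs_pos|exact E1]).
  assert (Rmax (Rabs (a * F - b * 0 + - fst T)) (Rabs (a * 0 + b * F + - snd T)) <= e)
    by (apply Rmax_lub; assumption).
  assert (0 <= sqrt 2) by apply sqrt_pos.
  assert (0 <= Rmax (Rabs (a * F - b * 0 + - fst T)) (Rabs (a * 0 + b * F + - snd T)))
    by (eapply Rle_trans; [apply Rabs_pos| apply Rmax_l]).
  nra.
Qed.

Lemma Cmod_eR r : Cmod (eR r) = 1.
Proof.
  unfold Cmod, eR. simpl. pose proof (sin2_cos2 (2*PI*r)). unfold Rsqr in H.
  replace (cos (2 * PI * r) * (cos (2 * PI * r) * 1) + sin (2 * PI * r) * (sin (2 * PI * r) * 1)) with 1 by lra.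
  apply sqrt_1.
Qed.

Definition delta t := 32 * st t * 2 ^ 15.

Lemma theta_approx i0 k i j t : (i0 < 3)%nat -> (i < 3)%nat -> 0 <= st t <= 1/2 ->
  Cmod (theta (alpha_ i) (beta_ j) (0,t) (zt i0 k t) * RtoC (Ft i0 t) - target i0 i j k) <= 2 * delta t.
Proof.
  intros H0 H Hs. unfold theta. apply comp_bound with (N0 := 1%nat). apply Ft_pos.
  intros N HN. rewrite theta_partial_box, <- boxsum_mult_r.
  rewrite boxsum_ext with (g := fun m n => (ph i j k m n * RtoC (st t ^ Kn i0 i m n))%C)
    by (intros; apply term_scaled; auto).
  rewrite <- (box_h i0 i j k N) by auto.
  apply box_approx; auto.
  - intros m n. unfold ph. rewrite Cmod_mult.
    rewrite !Cmod_eR. lra.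
  - intros m n. unfold Kn. pose proof (Kz_bound _ m n (dd_range _ _ H0 H)).
    pose proof (Kz_nonneg (dd i0 i) m n (dd_range _ _ H0 H)).
    apply Nat2Z.inj_le. rewrite Nat2Z.inj_add, Nat2Z.inj_add, !Zabs2Nat.id_abs, Z2Nat.id by lia. lia.
Qed.

Lemma sum3 (f : nat -> C) : sum_n f 2 = (f 0%nat + f 1%nat + f 2%nat)%C.
Proof. rewrite !sum_Sn, sum_O. reflexivity. Qed.

Lemma sum3R (f : nat -> R) : sum_n f 2 = f 0%nat + f 1%nat + f 2%nat.
Proof. rewrite !sum_Sn, sum_O. reflexivity. Qed.

Lemma cube_diff (a b : C) e : Cmod (a - b) <= e -> e <= 1 -> Cmod b <= 2 ->
  Cmod (cube b - cube a) <= 19 * e.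
Proof.
  intros H1 H2 H3.
  replace (cube b - cube a)%C with ((b - a) * (a * a + a * b + b * b))%C by (unfold cube; ring).
  rewrite Cmod_mult.
  assert (Ha : Cmod a <= 3).
  { replace a with ((a - b) + b)%C by ring. eapply Rle_trans. apply Cmod_triangle. lra. }
  assert (Hba : Cmod (b - a) = Cmod (a - b)).
  { replace (b - a)%C with (- (a - b))%C by ring. apply Cmod_opp. }
  assert (Q : Cmod (a * a + a * b + b * b) <= 19).
  { eapply Rle_trans. apply Cmod_triangle. rewrite !Cmod_mult.
    eapply Rle_trans. apply Rplus_le_compat_r. apply Cmod_triangle. rewrite !Cmod_mult.
    pose proof (Cmod_ge_0 a). pose proof (Cmod_ge_0 b). nra. }
  pose proof (Cmod_ge_0 (a * a + a * b + b * b)). pose proof (Cmod_ge_0 (a - b)). nra.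
Qed.

Definition S33 (f : nat -> nat -> C) : C := sum_n (fun i => sum_n (fun j => f i j) 2) 2.

Lemma S33_eq f : S33 f = (f 0%nat 0%nat + f 0%nat 1%nat + f 0%nat 2%nat + (f 1%nat 0%nat + f 1%nat 1%nat + f 1%nat 2%nat)
   + (f 2%nat 0%nat + f 2%nat 1%nat + f 2%nat 2%nat))%C.
Proof. unfold S33. rewrite sum3, !sum3. reflexivity. Qed.

Definition cS (c : nat -> nat -> C) : R :=
  Cmod (c 0%nat 0%nat) + Cmod (c 0%nat 1%nat) + Cmod (c 0%nat 2%nat) + Cmod (c 1%nat 0%nat) + Cmod (c 1%nat 1%nat)
  + Cmod (c 1%nat 2%nat) + Cmod (c 2%nat 0%nat) + Cmod (c 2%nat 1%nat) + Cmod (c 2%nat 2%nat).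

Lemma Cmod_sum3 x y z : Cmod (x + y + z) <= Cmod x + Cmod y + Cmod z.
Proof. eapply Rle_trans. apply Cmod_triangle. pose proof (Cmod_triangle x y). lra. Qed.

Lemma comb_bound (c a b : nat -> nat -> C) e :
  S33 (fun i j => c i j * cube (a i j))%C = RtoC 0 ->
  (forall i j, (i < 3)%nat -> (j < 3)%nat -> Cmod (a i j - b i j) <= e) ->
  (forall i j, (i < 3)%nat -> (j < 3)%nat -> Cmod (b i j) <= 2) -> e <= 1 ->
  Cmod (S33 (fun i j => c i j * cube (b i j))%C) <= 19 * e * cS c.
Proof.
  intros H Ha Hb He.
  assert (T : forall i j, (i < 3)%nat -> (j < 3)%nat ->
     Cmod (c i j * (cube (b i j) - cube (a i j)))%C <= Cmod (c i j) * (19 * e)).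
  { intros i j Hi Hj. rewrite Cmod_mult. apply Rmult_le_compat_l. apply Cmod_ge_0.
    apply cube_diff; auto. }
  assert (E : S33 (fun i j => c i j * cube (b i j))%C =
              S33 (fun i j => c i j * (cube (b i j) - cube (a i j)))%C).
  { rewrite !S33_eq. rewrite S33_eq in H.
    match type of H with ?L = _ => match goal with |- ?X = ?Y =>
      replace Y with (X - L)%C by ring end end.
    rewrite H. ring. }
  rewrite E, S33_eq.
  eapply Rle_trans. apply Cmod_sum3.
  pose proof (Cmod_sum3 (c 0%nat 0%nat * (cube (b 0%nat 0%nat) - cube (a 0%nat 0%nat)))
     (c 0%nat 1%nat * (cube (b 0%nat 1%nat) - cube (a 0%nat 1%nat)))
     (c 0%nat 2%nat * (cube (b 0%nat 2%nat) - cube (a 0%nat 2%nat)))).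
  pose proof (Cmod_sum3 (c 1%nat 0%nat * (cube (b 1%nat 0%nat) - cube (a 1%nat 0%nat)))
     (c 1%nat 1%nat * (cube (b 1%nat 1%nat) - cube (a 1%nat 1%nat)))
     (c 1%nat 2%nat * (cube (b 1%nat 2%nat) - cube (a 1%nat 2%nat)))).
  pose proof (Cmod_sum3 (c 2%nat 0%nat * (cube (b 2%nat 0%nat) - cube (a 2%nat 0%nat)))
     (c 2%nat 1%nat * (cube (b 2%nat 1%nat) - cube (a 2%nat 1%nat)))
     (c 2%nat 2%nat * (cube (b 2%nat 2%nat) - cube (a 2%nat 2%nat)))).
  pose proof (T 0%nat 0%nat ltac:(lia) ltac:(lia)). pose proof (T 0%nat 1%nat ltac:(lia) ltac:(lia)).
  pose proof (T 0%nat 2%nat ltac:(lia) ltac:(lia)). pose proof (T 1%nat 0%nat ltac:(lia) ltac:(lia)).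
  pose proof (T 1%nat 1%nat ltac:(lia) ltac:(lia)). pose proof (T 1%nat 2%nat ltac:(lia) ltac:(lia)).
  pose proof (T 2%nat 0%nat ltac:(lia) ltac:(lia)). pose proof (T 2%nat 1%nat ltac:(lia) ltac:(lia)).
  pose proof (T 2%nat 2%nat ltac:(lia) ltac:(lia)).
  unfold cS. lra.
Qed.

Lemma S33_mult_r f x : S33 (fun i j => f i j * x)%C = (S33 f * x)%C.
Proof. rewrite !S33_eq. ring. Qed.

Lemma target_bound i0 i j k : Cmod (target i0 i j k) <= 2.
Proof.
  unfold target. destruct (i =? i0)%nat.
  - eapply Rle_trans. apply Cmod_triangle. unfold ph. rewrite !Cmod_mult, !Cmod_eR. lra.
  - rewrite Cmod_R, Rabs_R0. lra.
Qed.

Lemma st_pos t : 0 < st t.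
Proof. apply exp_pos. Qed.

Lemma G_bound (c : nat -> nat -> C) i0 k t :
  (forall (tau : C) (z : vec), 0 < Im tau ->
       sum_n (fun i => sum_n (fun j =>
         (c i j * cube (theta (alpha_ i) (beta_ j) tau z))%C) 2) 2 = RtoC 0) ->
  (i0 < 3)%nat -> 0 < t -> st t <= 1/2 -> 2 * delta t <= 1 ->
  Cmod (S33 (fun i j => c i j * cube (target i0 i j k))%C) <= 19 * (2 * delta t) * cS c.
Proof.
  intros Hyp H0 Ht Hs Hd.
  apply comb_bound with (a := fun i j => (theta (alpha_ i) (beta_ j) (0,t) (zt i0 k t) * RtoC (Ft i0 t))%C); auto.
  - transitivity (S33 (fun i j => c i j * cube (theta (alpha_ i) (beta_ j) (0,t) (zt i0 k t)))%C * cube (RtoC (Ft i0 t)))%C.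
    + rewrite <- S33_mult_r. unfold S33. apply sum_n_ext; intro i. apply sum_n_ext; intro j.
      match goal with |- ?A = ?B => change (@eq C A B) end. unfold cube. ring.
    + unfold S33. rewrite Hyp by (simpl; lra). ring.
  - intros i j Hi Hj. apply theta_approx; auto. pose proof (st_pos t). lra.
  - intros. apply target_bound.
Qed.

Lemma st_small eta : 0 < eta -> exists t, 0 < t /\ st t <= eta.
Proof.
  intros He. exists (36 / (2 * PI * eta)). pose proof PI_RGT_0.
  split. apply Rdiv_lt_0_compat; [lra|]. apply Rmult_lt_0_compat; lra.
  unfold st. replace (-(2 * PI * (36 / (2 * PI * eta)) / 36)) with (- (/ eta)) by (field; lra).
  rewrite exp_Ropp. pose proof (exp_ineq1_le (/ eta)).
  assert (0 < / eta) by (apply Rinv_0_lt_compat; lra).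
  apply Rle_trans with (/ (/ eta)). apply Rinv_le_contravar; lra. rewrite Rinv_inv. lra.
Qed.

Lemma G_zero (c : nat -> nat -> C) i0 k :
  (forall (tau : C) (z : vec), 0 < Im tau ->
       sum_n (fun i => sum_n (fun j =>
         (c i j * cube (theta (alpha_ i) (beta_ j) tau z))%C) 2) 2 = RtoC 0) ->
  (i0 < 3)%nat -> S33 (fun i j => c i j * cube (target i0 i j k))%C = RtoC 0.
Proof.
  intros Hyp H0. set (G := S33 _).
  destruct (Req_dec (Cmod G) 0) as [E|E]. apply Cmod_eq_0, E.
  exfalso. pose proof (Cmod_ge_0 G) as Hg. set (g := Cmod G) in *.
  set (K := 32 * 2 ^ 15).
  assert (HK : 1 <= K). { unfold K. assert (1 <= 2^15) by (apply pow_R1_Rle; lra). lra. }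
  assert (Hc : 0 <= cS c). { unfold cS. pose proof (Cmod_ge_0 (c 0%nat 0%nat)). pose proof (Cmod_ge_0 (c 0%nat 1%nat)).
    pose proof (Cmod_ge_0 (c 0%nat 2%nat)). pose proof (Cmod_ge_0 (c 1%nat 0%nat)). pose proof (Cmod_ge_0 (c 1%nat 1%nat)).
    pose proof (Cmod_ge_0 (c 1%nat 2%nat)). pose proof (Cmod_ge_0 (c 2%nat 0%nat)). pose proof (Cmod_ge_0 (c 2%nat 1%nat)).
    pose proof (Cmod_ge_0 (c 2%nat 2%nat)). lra. }
  set (eta := Rmin (1 / (2 * K)) (g / (38 * K * (cS c + 1)))).
  assert (Heta : 0 < eta). { unfold eta. apply Rmin_pos. apply Rdiv_lt_0_compat; lra.
    apply Rdiv_lt_0_compat. lra. nra. }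
  destruct (st_small eta Heta) as [t [Ht Hst]].
  assert (Hst1 : st t <= 1 / (2 * K)) by (eapply Rle_trans; [exact Hst| apply Rmin_l]).
  assert (Hst2 : st t <= g / (38 * K * (cS c + 1))) by (eapply Rle_trans; [exact Hst| apply Rmin_r]).
  assert (Hd : 2 * delta t <= 1).
  { unfold delta. fold K. replace (32 * st t * 2 ^ 15) with (K * st t) by (unfold K; ring).
    apply Rmult_le_compat_l with (r := 2 * K) in Hst1; [|lra].
    replace (2 * K * (1 / (2 * K))) with 1 in Hst1 by (field; lra). lra. }
  assert (Hs : st t <= 1/2).
  { apply Rle_trans with (1 / (2 * K)); auto. apply Rmult_le_compat_l; [lra|].
    apply Rinv_le_contravar; lra. }
  pose proof (G_bound c i0 k t Hyp H0 Ht Hs Hd) as B. fold G g in B.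
  unfold delta in B. fold K in B. replace (32 * st t * 2 ^ 15) with (K * st t) in B by (unfold K; ring).
  apply Rmult_le_compat_l with (r := 38 * K * (cS c + 1)) in Hst2; [|nra].
  replace (38 * K * (cS c + 1) * (g / (38 * K * (cS c + 1)))) with g in Hst2 by (field; nra).
  pose proof (st_pos t). nra.
Qed.

Lemma eR_add a b : eR (a + b) = (eR a * eR b)%C.
Proof.
  unfold eR. apply c_proj_eq; simpl; rewrite Rmult_plus_distr_l.
  - rewrite cos_plus. ring.
  - rewrite sin_plus. ring.
Qed.

Lemma eR_0 : eR 0 = RtoC 1.
Proof. unfold eR, RtoC. rewrite Rmult_0_r, cos_0, sin_0. reflexivity. Qed.

Lemma eR_shift r n : eR (r - INR n) = eR r.
Proof.
  unfold eR. 
  rewrite <- (cos_period (2 * PI * (r - INR n)) n), <- (sin_period (2 * PI * (r - INR n)) n).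
  f_equal; f_equal; ring.
Qed.

Lemma eR_13 : eR (1/3) = (-1/2, sqrt 3 / 2).
Proof.
  unfold eR. replace (2 * PI * (1/3)) with (PI - PI/3) by field.
  rewrite Rtrigo_facts.cos_pi_minus, sin_PI_x, cos_PI3, sin_PI3. f_equal; field.
Qed.

Lemma eR_23 : eR (2/3) = (-1/2, - (sqrt 3 / 2)).
Proof.
  unfold eR. replace (2 * PI * (2/3)) with (PI/3 + PI) by field.
  rewrite neg_cos, neg_sin, cos_PI3, sin_PI3. f_equal; field.
Qed.

Lemma V_val j k : (j < 3)%nat -> (k < 3)%nat ->
  cube (RtoC 1 + eR (-(2 * INR j + INR k) / 3)) = if (j =? k)%nat then RtoC 8 else RtoC (-1).
Proof.
  intros Hj Hk. assert (S3 : sqrt 3 * sqrt 3 = 3) by (apply sqrt_sqrt; lra).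
  assert (S3b : sqrt 3 * sqrt 3 * sqrt 3 = 3 * sqrt 3) by (rewrite S3; ring).
  destruct j as [|[|[|j]]]; try lia; destruct k as [|[|[|k]]]; try lia; simpl Nat.eqb; cbv iota.
  all: first
    [ replace (-(2 * INR _ + INR _) / 3) with (0 - INR 0) by (simpl; lra)
    | replace (-(2 * INR _ + INR _) / 3) with (0 - INR 1) by (simpl; lra)
    | replace (-(2 * INR _ + INR _) / 3) with (0 - INR 2) by (simpl; lra)
    | replace (-(2 * INR _ + INR _) / 3) with (1/3 - INR 1) by (simpl; lra)
    | replace (-(2 * INR _ + INR _) / 3) with (1/3 - INR 2) by (simpl; lra)
    | replace (-(2 * INR _ + INR _) / 3) with (2/3 - INR 1) by (simpl; lra)
    | replace (-(2 * INR _ + INR _) / 3) with (2/3 - INR 2) by (simpl; lra) ].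
  all: rewrite eR_shift; try rewrite eR_0; try rewrite eR_13; try rewrite eR_23.
  all: unfold cube, RtoC; apply c_proj_eq; simpl; lra.
Qed.

Definition pp (i0 k : nat) := BR (INR i0 / 3) (INR i0 / 3) (INR k / 6) 0.
Definition qq (j k : nat) := -(2 * INR j + INR k) / 3.

Lemma target_eq i0 j k : target i0 i0 j k = (eR (pp i0 k) * (RtoC 1 + eR (qq j k)))%C.
Proof.
  unfold target. rewrite Nat.eqb_refl. unfold ph.
  rewrite <- !eR_add.
  replace (BR (INR j / 3) 0 (IZR 0) (IZR 0) + BR (INR i0 / 3 + IZR 0) (INR i0 / 3 + IZR 0) (INR k / 6) 0)
    with (pp i0 k + 0) by (unfold pp, BR; simpl; ring).
  replace (BR (INR j / 3) 0 (IZR (-1)) (IZR 0) + BR (INR i0 / 3 + IZR (-1)) (INR i0 / 3 + IZR 0) (INR k / 6) 0)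
    with (pp i0 k + qq j k) by (unfold pp, qq, BR; simpl; field).
  rewrite !eR_add, eR_0. ring.
Qed.

Lemma S33_target (c : nat -> nat -> C) i0 k : (i0 < 3)%nat ->
  S33 (fun i j => c i j * cube (target i0 i j k))%C =
  (c i0 0%nat * cube (target i0 i0 0%nat k) + c i0 1%nat * cube (target i0 i0 1%nat k)
   + c i0 2%nat * cube (target i0 i0 2%nat k))%C.
Proof.
  intros H. rewrite S33_eq.
  destruct i0 as [|[|[|i0]]]; try lia; unfold target; cbn [Nat.eqb]; unfold cube; ring.
Qed.

Lemma cube_nz p : cube (eR p) <> RtoC 0.
Proof.
  intros E. assert (Cmod (cube (eR p)) = 1) by (unfold cube; rewrite !Cmod_mult, Cmod_eR; ring).
  rewrite E, Cmod_R, Rabs_R0 in H. lra.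
Qed.

Lemma row_eq (c : nat -> nat -> C) i0 k :
  (forall (tau : C) (z : vec), 0 < Im tau ->
       sum_n (fun i => sum_n (fun j =>
         (c i j * cube (theta (alpha_ i) (beta_ j) tau z))%C) 2) 2 = RtoC 0) ->
  (i0 < 3)%nat ->
  (c i0 0%nat * cube (RtoC 1 + eR (qq 0 k)) + c i0 1%nat * cube (RtoC 1 + eR (qq 1 k))
   + c i0 2%nat * cube (RtoC 1 + eR (qq 2 k)))%C = RtoC 0.
Proof.
  intros Hyp H. pose proof (G_zero c i0 k Hyp H) as G.
  rewrite S33_target, !target_eq in G by exact H.
  set (X := (c i0 0%nat * cube (RtoC 1 + eR (qq 0 k)) + c i0 1%nat * cube (RtoC 1 + eR (qq 1 k))
   + c i0 2%nat * cube (RtoC 1 + eR (qq 2 k)))%C).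
  assert (E : (cube (eR (pp i0 k)) * X)%C = RtoC 0).
  { rewrite <- G. unfold X, cube. ring. }
  pose proof (cube_nz (pp i0 k)) as NZ.
  replace X with (/ cube (eR (pp i0 k)) * (cube (eR (pp i0 k)) * X))%C by (field; exact NZ).
  rewrite E. unfold RtoC. apply c_proj_eq; simpl; ring.
Qed.

Theorem proposition7p15 :
  forall c : nat -> nat -> C,
    (forall (tau : C) (z : vec), 0 < Im tau ->
       sum_n (fun i => sum_n (fun j =>
         (c i j * cube (theta (alpha_ i) (beta_ j) tau z))%C) 2) 2 = RtoC 0) ->
    forall i j : nat, (i < 3)%nat -> (j < 3)%nat -> c i j = RtoC 0.
Proof.
  intros c Hyp i j Hi Hj.
  pose proof (row_eq c i 0 Hyp Hi) as E0.
  pose proof (row_eq c i 1 Hyp Hi) as E1.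
  pose proof (row_eq c i 2 Hyp Hi) as E2.
  unfold qq in E0, E1, E2.
  rewrite !V_val in E0, E1, E2 by lia. cbn [Nat.eqb] in E0, E1, E2.
  destruct (c i 0%nat) as [a1 a2] eqn:Ea. destruct (c i 1%nat) as [b1 b2] eqn:Eb.
  destruct (c i 2%nat) as [d1 d2] eqn:Ed.
  pose proof (f_equal fst E0) as F0. pose proof (f_equal snd E0) as G0.
  pose proof (f_equal fst E1) as F1. pose proof (f_equal snd E1) as G1.
  pose proof (f_equal fst E2) as F2. pose proof (f_equal snd E2) as G2.
  unfold RtoC in *. simpl in F0, G0, F1, G1, F2, G2.
  destruct j as [|[|[|j]]]; try lia; [rewrite Ea|rewrite Eb|rewrite Ed]; apply c_proj_eq; simpl; lra.
Qed.
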